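(* Let $G$ be a fullerene graph with a perfect star packing $S$ of type $P0$. Then $G-C(S)$ contains no cycle of odd length that is a non-facial cycle of $G$.
   Context: A fullerene graph is a finite simple connected (equivalently, $3$-connected) plane cubic graph all of whose faces are pentagons or hexagons. A perfect star packing of $G$ is a spanning subgraph $S$ of $G$ every connected component of which is isomorphic to $K_{1,3}$; $C(S)$ denotes the set of centers (degree-$3$ vertices) of the stars in $S$. $S$ is of type $P0$ if no vertex of $C(S)$ lies on a pentagonal face of $G$. A cycle of $G$ is facial if it bounds a face of $G$, non-facial otherwise. *)

(* Defs.v *)
(* A plane graph is encoded as a combinatorial map
   (rotation system): darts D, a fixed-point-free edge involution [e],
   a vertex rotation permutation [n] whose orbits are the vertices
   (vertex of a dart given by [vtx : D -> V]); faces are the orbits of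
   the face permutation [x |-> n (e x)]; planarity = Euler genus 0. *)
From mathcomp Require Import all_boot.
Set Implicit Arguments. Unset Strict Implicit. Unset Printing Implicit Defensive.

Section Map.
Variables (V D : finType) (vtx : D -> V) (e n : D -> D).

Definition fperm (x : D) : D := n (e x).

Definition adjG : rel V := fun u v => [exists x, (vtx x == u) && (vtx (e x) == v)].

(* (V, D, vtx, e, n) is a fullerene graph, i.e. a finite simple connected
   plane cubic graph all of whose faces are pentagons or hexagons *)
Definition fullerene : Prop :=
  [/\ (forall x, e (e x) = x), (forall x, e x != x),
      injective n,
      (forall x y, fconnect n x y = (vtx x == vtx y)) & (forall v, exists x, vtx x = v)] /\
  [/\ (forall x, order n x = 3),
      (forall x, vtx (e x) != vtx x),
      (forall x y, vtx x = vtx y -> vtx (e x) = vtx (e y) -> x = y),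
      (forall u v, connect adjG u v)
    & (#|V| + fcard fperm D).*2 = #|D| + 4] /\           (* Euler: V - E + F = 2, planar *)
  (forall x, order fperm x \in [:: 5; 6]).

Definition is_cycle (c : seq V) : bool := [&& 3 <= size c, uniq c & cycle adjG c].

Definition face_seq (x : D) : seq V := map vtx (orbit fperm x).

Definition facial (c : seq V) : Prop :=
  exists x, face_seq x = c \/ face_seq x = rev c.

(* perfect star packing: spanning subgraph s (edge relation) of G every
   connected component of which is isomorphic to K_{1,3} *)
Definition perfect_star_packing (s : rel V) : Prop :=
  [/\ symmetric s, irreflexive s, (forall u v, s u v -> adjG u v)
    & forall v, exists c a b d : V,
        [/\ uniq [:: c; a; b; d],
            [set w | connect s v w] = [set c; a; b; d]
          & forall x y, x \in [set c; a; b; d] -> y \in [set c; a; b; d] ->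
              s x y = ((x == c) && (y \in [set a; b; d])) ||
                      ((y == c) && (x \in [set a; b; d]))]].

Definition centers (s : rel V) : {set V} := [set v | #|[set w | s v w]| == 3].

Definition typeP0 (s : rel V) : Prop :=
  forall x : D, order fperm x = 5 -> forall y, y \in orbit fperm x -> vtx y \notin centers s.

End Map.

(* Main.v *)
Require Import Defs.
From mathcomp Require Import all_boot zify.
Set Implicit Arguments. Unset Strict Implicit. Unset Printing Implicit Defensive.

Section Fl.
Variables (V D : finType) (vtx : D -> V) (e n : D -> D) (s : rel V).
Hypothesis Hee : forall x, e (e x) = x.
Hypothesis Hinj : injective n.
Hypothesis Hfc : forall x y, fconnect n x y = (vtx x == vtx y).
Hypothesis Hsurj : forall v, exists x, vtx x = v.
Hypothesis Hord : forall x, order n x = 3.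
Hypothesis Hsimp : forall x y, vtx x = vtx y -> vtx (e x) = vtx (e y) -> x = y.
Hypothesis Hface : forall x, order (fperm e n) x \in [:: 5; 6].
Hypothesis Hpsp : perfect_star_packing vtx e s.
Hypothesis HP0 : typeP0 vtx e n s.

Local Notation fp := (fperm e n).
Local Notation C := (centers s).
Local Notation adj := (adjG vtx e).

Lemma vtx_n x : vtx (n x) = vtx x.
Proof. by apply/esym/eqP; rewrite -Hfc fconnect1. Qed.

Lemma n3 x : n (n (n x)) = x.
Proof. by have := iter_order Hinj x; rewrite Hord. Qed.

Lemma orbit_n x : orbit n x = [:: x; n x; n (n x)].
Proof. by rewrite /orbit Hord. Qed.

Lemma n_neq x : (n x != x) && (n (n x) != x).
Proof.
have := orbit_uniq n x; rewrite orbit_n /= !inE !negb_or.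
by case/andP=> /andP[/negPf + /negPf +] _; rewrite !(eq_sym x) => -> ->.
Qed.

Lemma dart_cases x y : vtx y = vtx x -> [\/ y = x, y = n x | y = n (n x)].
Proof.
move=> h; have : y \in orbit n x by rewrite -fconnect_orbit Hfc h.
rewrite orbit_n !inE => /orP[/eqP->|/orP[/eqP->|/eqP->]]; by [constructor 1|constructor 2|constructor 3].
Qed.

Lemma vtx_fp z : vtx (fp z) = vtx (e z).
Proof. by rewrite /fperm vtx_n. Qed.

Lemma no_back z : vtx (e (fp z)) != vtx z.
Proof.
apply/eqP=> h.
have E : fp z = e z.
  by apply: Hsimp; rewrite ?vtx_fp // h Hee.
have := n_neq (e z); rewrite /fperm in E; by rewrite E eqxx.
Qed.

Lemma adj_dart u w : adj u w -> exists x, vtx x = u /\ vtx (e x) = w.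
Proof. by case/existsP=> x /andP[/eqP h1 /eqP h2]; exists x. Qed.

Lemma dart_adj x : adj (vtx x) (vtx (e x)).
Proof. by apply/existsP; exists x; rewrite !eqxx. Qed.

Lemma adj_sym u w : adj u w -> adj w u.
Proof. move=> /adj_dart[x [<- <-]]; have := dart_adj (e x); by rewrite Hee. Qed.

Lemma starK v : exists c a b d : V,
  [/\ uniq [:: c; a; b; d],
      (forall x, connect s v x = (x \in [set c; a; b; d])),
      (forall x, x \in [set c; a; b; d] -> (x \in C) = (x == c)),
      (forall x, s c x = (x \in [set a; b; d])) &
      (forall x, x \in [set a; b; d] -> s x c)].
Proof.
case: Hpsp => ssym sirr sadj /(_ v) [c [a [b [d [U K F]]]]].
have conK x : connect s v x = (x \in [set c; a; b; d]) by rewrite -K inE.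
have clo x y : x \in [set c; a; b; d] -> s x y -> y \in [set c; a; b; d].
  by rewrite -!conK => h1 h2; apply: connect_trans h1 (connect1 h2).
have Kc : c \in [set c; a; b; d] by rewrite !inE eqxx.
have Kabd x : x \in [set a; b; d] -> x \in [set c; a; b; d].
  by rewrite !inE => /orP[/orP[]|] ->; rewrite ?orbT.
have cnabd : c \notin [set a; b; d].
  move: U; rewrite /= !inE !negb_or => /andP[/and3P[h1 h2 h3] _].
  by rewrite h1 h2 h3.
have sc w : s c w = (w \in [set a; b; d]).
  case hx : (w \in [set c; a; b; d]); last first.
    apply/idP/idP; [by move=> /(clo _ _ Kc); rewrite hx | by move/Kabd; rewrite hx].
  by rewrite F // eqxx (negPf cnabd) andbF orbF.
have sx x : x \in [set a; b; d] -> forall y, s x y = (y == c).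
  move=> hx y; case hy : (y \in [set c; a; b; d]); last first.
    apply/idP/idP; [by move=> /(clo _ _ (Kabd _ hx)); rewrite hy | by move/eqP=> E; rewrite E Kc in hy].
  rewrite (F x y (Kabd _ hx) hy). have -> : (x == c) = false by apply/negP=> /eqP E; move: cnabd; rewrite -E hx.
  by rewrite /= hx andbT.
exists c, a, b, d; split => //.
- move=> x hx; rewrite inE.
  have [->|nc] := eqVneq x c.
    apply/eqP; have -> : [set w | s c w] = [set a; b; d].
      by apply/setP=> w; rewrite inE sc.
    have -> : #|[set a; b; d]| = #|[:: a; b; d]|.
      by apply: eq_card => w; rewrite !inE orbA.
    have U' : uniq [:: a; b; d] by case/andP: U.
    by rewrite (card_uniqP U').
  have hx' : x \in [set a; b; d] by move: hx nc; rewrite !inE -!orbA => /orP[/eqP ->|]; rewrite ?eqxx // orbA.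
  have -> : [set w | s x w] = [set c] by apply/setP=> w; rewrite !inE sx.
  by rewrite cards1.
- by move=> x hx; rewrite sx.
Qed.

Lemma nc_center v : v \notin C -> exists c, c \in C /\ s v c.
Proof.
move=> hv; have [c [a [b [d [U K Cc sc sx]]]]] := starK v.
have Kv : v \in [set c; a; b; d] by rewrite -K connect0.
exists c; split; first by rewrite Cc ?eqxx // !inE eqxx.
apply: sx; rewrite Cc // in hv.
by move: Kv hv; rewrite !inE -!orbA => /orP[/eqP ->|]; rewrite ?eqxx // orbA.
Qed.

Lemma center_leaf c0 w : c0 \in C -> s c0 w -> w \notin C.
Proof.
move=> hc hs; have [c [a [b [d [U K Cc sc sx]]]]] := starK c0.
have Kc0 : c0 \in [set c; a; b; d] by rewrite -K connect0.
move: (hc); rewrite Cc // => /eqP E; subst c0.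
move: hs; rewrite sc => hw.
have Kw : w \in [set c; a; b; d] by move: hw; rewrite !inE => /orP[/orP[]|] ->; rewrite ?orbT.
rewrite Cc //; apply/negP=> /eqP E; subst w.
move: U; rewrite /= !inE !negb_or => /andP[/and3P[h1 h2 h3] _].
by move: hw; rewrite !inE (negPf h1) (negPf h2) (negPf h3).
Qed.

Lemma center_uniq y c1 c2 : c1 \in C -> c2 \in C -> s c1 y -> s c2 y -> c1 = c2.
Proof.
case: Hpsp => ssym _ _ _.
move=> h1 h2 s1 s2; have [c [a [b [d [U K Cc sc sx]]]]] := starK y.
have K1 : c1 \in [set c; a; b; d] by rewrite -K connect1 // ssym.
have K2 : c2 \in [set c; a; b; d] by rewrite -K connect1 // ssym.
by move: h1 h2; rewrite !Cc // => /eqP -> /eqP ->.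
Qed.

Lemma center_adj c0 w : c0 \in C -> adj c0 w -> s c0 w.
Proof.
case: Hpsp => ssym _ sadj _.
move=> hc hadj; have [c [a [b [d [U K Cc sc sx]]]]] := starK c0.
have Kc0 : c0 \in [set c; a; b; d] by rewrite -K connect0.
move: (hc); rewrite Cc // => /eqP E; subst c0.
have [z hz] := Hsurj c.
pose W := [:: vtx (e z); vtx (e (n z)); vtx (e (n (n z)))].
have inW u : adj c u -> u \in W.
  move=> /adj_dart [x [h1 <-]].
  have [->|->|->] := dart_cases (etrans h1 (esym hz)); by rewrite !inE eqxx ?orbT.
have sub : {subset [:: a; b; d] <= W}.
  move=> u hu; apply: inW; apply: sadj; rewrite sc.
  by move: hu; rewrite !inE => /orP[->|/orP[->|->]]; rewrite ?orbT.
have U' : uniq [:: a; b; d] by case/andP: U.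
have [_ eqW] := uniq_min_size U' sub (leqnn 3).
have := inW _ hadj; rewrite -eqW sc !inE.
by case/orP=> [->|/orP[->|->]]; rewrite ?orbT.
Qed.

Lemma fp_inj : injective fp.
Proof. by move=> x y; rewrite /fperm => /Hinj /(can_inj Hee). Qed.

Lemma face6 i z : vtx (iter i fp z) \in C -> iter 6 fp z = z.
Proof.
move=> hc; have := Hface z; rewrite !inE => /orP[/eqP o5|/eqP o6].
  have := HP0 o5 (y := iter i fp z); rewrite -fconnect_orbit fconnect_iter => /(_ isT).
  by rewrite hc.
by rewrite -{1}o6 iter_order //; apply: fp_inj.
Qed.

Lemma pat1 z : vtx z \in C -> vtx (fp (fp z)) \in C -> False.
Proof.
move=> h1 h2.
have a1 : adj (vtx z) (vtx (fp z)) by rewrite vtx_fp; apply: dart_adj.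
have a2 : adj (vtx (fp (fp z))) (vtx (fp z)).
  by apply: adj_sym; rewrite [vtx (fp (fp z))]vtx_fp; apply: dart_adj.
have E := center_uniq h1 h2 (center_adj h1 a1) (center_adj h2 a2).
by have := no_back z; rewrite -vtx_fp -E eqxx.
Qed.

Lemma pat2 z : vtx z \in C -> vtx (fp z) \in C -> False.
Proof.
move=> h1 h2.
have a1 : adj (vtx z) (vtx (fp z)) by rewrite vtx_fp; apply: dart_adj.
by have := center_leaf h1 (center_adj h1 a1); rewrite h2.
Qed.


Section Cyc.
Variables (x0 : V) (p : seq V) (d0 : D).
Local Notation c := (x0 :: p).
Local Notation m := (size c).
Hypothesis Hm : 3 <= m.
Hypothesis Hu : uniq c.
Hypothesis Hcy : cycle adj c.
Hypothesis Hnc : all (fun v => v \notin C) c.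

Lemma m0 : 0 < m. Proof. by apply: leq_trans Hm. Qed.

Definition vv i := nth x0 c (i %% m).

Lemma vv_mod i : vv (i + m) = vv i.
Proof. by rewrite /vv modnDr. Qed.

Lemma adj_base j : j < m -> adj (nth x0 c j) (nth x0 c (j.+1 %% m)).
Proof.
move=> hj; have /(pathP x0) H : path adj x0 (rcons p x0) by [].
have := H j; rewrite size_rcons => /(_ hj).
have -> : nth x0 (x0 :: rcons p x0) j = nth x0 c j.
  by rewrite -rcons_cons nth_rcons hj.
rewrite nth_rcons; case: (ltngtP j (size p)) => [lt|gt|eq].
- by rewrite modn_small.
- by move: hj; rewrite /= ltnS leqNgt gt.
- by rewrite eq /= modnn; case: (size p).+1 => // *; rewrite ?eqxx.
Qed.

Lemma adj_vv i : adj (vv i) (vv i.+1).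
Proof.
rewrite /vv; have -> : i.+1 %% m = (i %% m).+1 %% m.
  by rewrite -addn1 -modnDml addn1.
exact: adj_base (ltn_pmod i m0).
Qed.

Lemma vv_nc i : vv i \notin C.
Proof. by have := allP Hnc (vv i); apply; rewrite /vv mem_nth // ltn_pmod // m0. Qed.

Lemma vv_neq2 i : vv i.+2 != vv i.
Proof.
have m0 : 0 < m by apply: leq_trans Hm.
rewrite /vv nth_uniq ?ltn_pmod //.
rewrite -addn2 -{2}[i]addn0 eqn_modDl.
by rewrite modn_small ?(leq_trans _ Hm) // mod0n.
Qed.

Definition dartof u w := odflt d0 [pick x | (vtx x == u) && (vtx (e x) == w)].

Lemma dartofP u w : adj u w -> vtx (dartof u w) = u /\ vtx (e (dartof u w)) = w.
Proof.
move=> /adj_dart [y [h1 h2]]; rewrite /dartof; case: pickP => [x /andP[/eqP -> /eqP ->] //|].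
by move=> /(_ y); rewrite h1 h2 !eqxx.
Qed.

Definition A i := dartof (vv i) (vv i.+1).
Definition P i := e (A i).

Lemma vA i : vtx (A i) = vv i.
Proof. by case: (dartofP (adj_vv i)). Qed.
Lemma veA i : vtx (e (A i)) = vv i.+1.
Proof. by case: (dartofP (adj_vv i)). Qed.
Lemma vP i : vtx (P i) = vv i.+1.
Proof. exact: veA. Qed.
Lemma veP i : vtx (e (P i)) = vv i.
Proof. by rewrite /P Hee vA. Qed.

Lemma A_mod i : A (i + m) = A i.
Proof. by rewrite /A vv_mod -addSn vv_mod. Qed.

Definition tauT i := n (P i) != A i.+1.
Definition third i := if tauT i then n (P i) else n (A i.+1).

Lemma AneP i : A i.+1 != P i.
Proof.
apply/eqP=> E; have := vv_neq2 i; by rewrite -veA E veP eqxx.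
Qed.

Lemma Fcase i : ~~ tauT i -> [/\ n (P i) = A i.+1, n (A i.+1) = third i & n (third i) = P i].
Proof.
rewrite /third => h; rewrite (negPf h); move: h; rewrite negbK => /eqP E.
by rewrite -E n3.
Qed.

Lemma Tcase i : tauT i -> [/\ n (P i) = third i, n (third i) = A i.+1 & n (A i.+1) = P i].
Proof.
rewrite /third => h; rewrite h.
have : vtx (A i.+1) = vtx (P i) by rewrite vA vP.
case/dart_cases=> E.
- by have := AneP i; rewrite E eqxx.
- by move: h; rewrite /tauT E eqxx.
- by rewrite E n3.
Qed.

Lemma vthird i : vtx (third i) = vv i.+1.
Proof. by rewrite /third; case: ifP => _; rewrite vtx_n ?vA ?vP. Qed.

Lemma cthird i : vtx (e (third i)) \in C.
Proof.
have [cc [hc hs]] := nc_center (vv_nc i.+1).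
case: Hpsp => _ _ sadj _.
have [y [h1 h2]] := adj_dart (sadj _ _ hs).
have : vtx y = vtx (P i) by rewrite h1 vP.
case/dart_cases => E; subst y.
- by move: hc; rewrite -h2 veP (negPf (vv_nc i)).
- case h: (tauT i); first by have [E1 _ _] := Tcase h; rewrite -E1 h2.
  have [E _ _] := Fcase (negbT h); by move: hc; rewrite -h2 E veA (negPf (vv_nc _)).
- case h: (tauT i).
    have [E1 E2 _] := Tcase h; by move: hc; rewrite -h2 E1 E2 veA (negPf (vv_nc _)).
  by have [E1 E2 _] := Fcase (negbT h); rewrite E1 E2 in h2; rewrite h2.
Qed.

Lemma tau_mod i : tauT (i + m) = tauT i.
Proof. by rewrite /tauT /P A_mod -addSn A_mod. Qed.


Lemma fpP j : fp (P j) = n (A j).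
Proof. by rewrite /fperm /P Hee. Qed.
Lemma fpA j : fp (A j) = n (P j).
Proof. by []. Qed.
Lemma fpt j : fp (e (third j)) = n (third j).
Proof. by rewrite /fperm Hee. Qed.

Lemma fwd i : tauT i -> ~~ tauT i.+1 -> [&& ~~ tauT i.+2, ~~ tauT i.+3 & tauT i.+4].
Proof.
move=> t0 f1.
have h6 := face6 (i := 0) (z := e (third i)) (cthird i); rewrite /= in h6.
have x1 : fp (e (third i)) = A i.+1 by rewrite fpt; case: (Tcase t0).
have x2 : fp (A i.+1) = A i.+2 by rewrite fpA; case: (Fcase f1).
rewrite x1 x2 in h6.
case t2 : (tauT i.+2).
  have x3 : fp (A i.+2) = third i.+2 by rewrite fpA; case: (Tcase t2).
  rewrite x3 in h6; exfalso; apply: (pat1 (z := fp (third i.+2))).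
    by rewrite vtx_fp; exact: cthird.
  by rewrite h6; exact: cthird.
have x3 : fp (A i.+2) = A i.+3 by rewrite fpA; case: (Fcase (negbT t2)).
rewrite x3 in h6; case t3 : (tauT i.+3).
  have x4 : fp (A i.+3) = third i.+3 by rewrite fpA; case: (Tcase t3).
  rewrite x4 in h6; exfalso; apply: (pat2 (z := fp (third i.+3))).
    by rewrite vtx_fp; exact: cthird.
  by rewrite h6; exact: cthird.
have x4 : fp (A i.+3) = A i.+4 by rewrite fpA; case: (Fcase (negbT t3)).
case t4 : (tauT i.+4) => //.
have x5 : fp (A i.+4) = A i.+4.+1 by rewrite fpA; case: (Fcase (negbT t4)).
rewrite x4 x5 in h6.
by have := cthird i; rewrite -h6 vtx_fp veA (negPf (vv_nc _)).
Qed.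

Lemma bwd i : ~~ tauT i -> tauT i.+1 -> [&& tauT i.+2, tauT i.+3 & ~~ tauT i.+4].
Proof.
move=> f0 t1.
have y0 : fp (P i.+1) = third i by rewrite fpP; case: (Fcase f0).
have y1 : fp (P i.+2) = P i.+1 by rewrite fpP; case: (Tcase t1).
case t2 : (tauT i.+2); last first.
  have h6 := face6 (i := 0) (z := e (third i.+2)) (cthird _); rewrite /= in h6.
  have z1 : fp (e (third i.+2)) = P i.+2 by rewrite fpt; case: (Fcase (negbT t2)).
  rewrite z1 y1 y0 in h6; exfalso; apply: (pat1 (z := fp (third i))).
    by rewrite vtx_fp; exact: cthird.
  by rewrite h6; exact: cthird.
have y2 : fp (P i.+3) = P i.+2 by rewrite fpP; case: (Tcase t2).
case t3 : (tauT i.+3); last first.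
  have h6 := face6 (i := 0) (z := e (third i.+3)) (cthird _); rewrite /= in h6.
  have z1 : fp (e (third i.+3)) = P i.+3 by rewrite fpt; case: (Fcase (negbT t3)).
  rewrite z1 y2 y1 y0 in h6; exfalso; apply: (pat2 (z := fp (third i))).
    by rewrite vtx_fp; exact: cthird.
  by rewrite h6; exact: cthird.
have y3 : fp (P i.+4) = P i.+3 by rewrite fpP; case: (Tcase t3).
case t4 : (tauT i.+4) => //.
have y4 : fp (P i.+4.+1) = P i.+4 by rewrite fpP; case: (Tcase t4).
have it : iter 6 fp (P i.+4.+1) = fp (third i) by rewrite /= y4 y3 y2 y1 y0.
have := face6 (i := 6) (z := P i.+4.+1); rewrite it vtx_fp => /(_ (cthird i)) h6.
by have := cthird i; rewrite -vtx_fp h6 vP (negPf (vv_nc _)).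
Qed.


Lemma face_of z s0 : iter m fp z = z -> uniq s0 -> size s0 = m ->
  (forall i, i < m -> vtx (iter i fp z) = nth x0 s0 i) -> face_seq vtx e n z = s0.
Proof.
move=> hz us0 ss0 hn.
have ms : map vtx (traject fp z m) = s0.
  apply: (@eq_from_nth _ x0); first by rewrite size_map size_traject ss0.
  move=> i; rewrite size_map size_traject => hi.
  by rewrite (nth_map z) ?size_traject // nth_traject // hn.
have ut : uniq (traject fp z m) by apply: (@map_uniq _ _ vtx); rewrite ms.
have cyc : fcycle fp (traject fp z m).
  rewrite /=.
  have -> : rcons (traject fp (fp z) (size p)) z = traject fp (fp z) (size p).+1.
    by rewrite trajectSr -iterSr hz.
  exact: fpath_traject.
have o : order fp z = m.
  by rewrite (order_cycle cyc ut) ?size_traject //= mem_head.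
by rewrite /face_seq /orbit o.
Qed.

Lemma tau_const j : odd m -> tauT j = tauT 0.
Proof.
move=> om.
have L k : tauT k != tauT k.+1 -> tauT k.+3 = ~~ tauT k /\ tauT k.+3 != tauT k.+4.
  case t0 : (tauT k); case t1 : (tauT k.+1) => // _.
    by have /and3P[_ /negPf -> ->] := fwd t0 (negbT t1).
  by have /and3P[_ -> /negPf ->] := bwd (negbT t0) t1.
have step k : tauT k = tauT k.+1.
  case: (boolP (tauT k == tauT k.+1)) => [/eqP //|hk]; exfalso.
  have key q : tauT (k + 3 * q) = (tauT k (+) odd q) /\ tauT (k + 3 * q) != tauT (k + 3 * q).+1.
    elim: q => [|q [IH1 IH2]]; first by rewrite muln0 addn0 addbF.
    have [L1 L2] := L _ IH2.
    have E : k + 3 * q.+1 = (k + 3 * q).+3 by rewrite mulnS; lia.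
    by rewrite E; split => //; rewrite L1 IH1 /= addbN.
  have [K1 _] := key m.
  have : tauT (k + 3 * m) = tauT k.
    by rewrite (_ : k + 3 * m = k + m + m + m) ?tau_mod //; lia.
  by rewrite K1 om addbT; case: (tauT k).
by elim: j => // j IH; rewrite -step.
Qed.

Lemma facial_main : odd m -> facial vtx e n c.
Proof.
move=> om; case T0 : (tauT 0).
- have fpP' j : fp (P j.+1) = P j.
    have tj : tauT j by rewrite tau_const.
    by rewrite fpP; have [_ _ ->] := Tcase tj.
  have iterP k j : iter k fp (P (j + k)) = P j.
    elim: k j => [|k IH] j; first by rewrite addn0.
    by rewrite iterSr addnS fpP' IH.
  exists (P (m.-2 + m)); right; apply: face_of.
  + by rewrite iterP /P A_mod.
  + by rewrite rev_uniq.
  + by rewrite size_rev.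
  + move=> i hi; rewrite (_ : m.-2 + m = (m.-2 + m - i) + i); last by lia.
    rewrite iterP vP nth_rev // /vv.
    rewrite (_ : (m.-2 + m - i).+1 = (m - i.+1) + m); last by lia.
    by rewrite modnDr modn_small //; lia.
- have fpA' j : fp (A j) = A j.+1.
    have tj : ~~ tauT j by rewrite tau_const // T0.
    by rewrite fpA; have [-> _ _] := Fcase tj.
  have iterA k : iter k fp (A 0) = A k.
    by elim: k => // k IH; rewrite iterS IH fpA'.
  exists (A 0); left; apply: face_of => //.
  + by rewrite iterA; have := A_mod 0; rewrite add0n.
  + by move=> i hi; rewrite iterA vA /vv modn_small.
Qed.
End Cyc.
End Fl.

Theorem mainTheorem13 (V D : finType) (vtx : D -> V) (e n : D -> D) (s : rel V) :
  fullerene vtx e n ->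
  perfect_star_packing vtx e s ->
  typeP0 vtx e n s ->
  forall c : seq V,
    is_cycle vtx e c ->
    all (fun v => v \notin centers s) c ->
    odd (size c) ->
    facial vtx e n c.
Proof.
move=> [[Hee _ Hinj Hfc Hsurj] [[Hord _ Hsimp _ _] Hface]] Hpsp HP0 c.
move=> /and3P[Hm Hu Hcy] Hnc Hodd.
case: c Hm Hu Hcy Hnc Hodd => [|x0 p] Hm Hu Hcy Hnc Hodd; first by [].

have [d0 _] := Hsurj x0.
exact: (facial_main Hee Hinj Hfc Hsurj Hord Hsimp Hface Hpsp HP0 d0 Hm Hu Hcy Hnc Hodd).
Qed.
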